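(* Let $\phi$ be an $n$-cube USO that does not have property L, and let the $2n$-cube USO $\psi$ be a kaleidoscope for $\phi$. Then every $2n$-cube USO $\psi'$ isomorphic to $\psi$ does not have property L.
   Context: For sets $U,V$ let $U\oplus V=(U\cup V)\setminus(U\cap V)$. An $m$-cube orientation on the vertex set of all subsets of $[m]$ has, for each vertex $V$ and $i\in[m]$, exactly one of the directed edges $V\to V\oplus\{i\}$, $V\oplus\{i\}\to V$; it is identified with its outmap $\phi(V)=\{i: V\to V\oplus\{i\}\}$. It is a unique sink orientation (USO) if every face (subgraph induced by an interval $\{X:A\subseteq X\subseteq B\}$) has exactly one sink. For a vertex $V$, the L-graph has vertex set $[m]\setminus V$ and an arc $(i,j)$ for distinct $i,j\notin V$ whenever $j\in\phi(V)\oplus\phi(V\cup\{i\})$; the orientation has property L if all its L-graphs are acyclic. For $V\subseteq[2n]$ write $V_L=V\cap[n]$ and $V_H=\{i-n: i\in V\cap\{n+1,\dots,2n\}\}$. A $2n$-cube USO $\psi$ is a kaleidoscope for the $n$-cube USO $\phi$ if $\psi(V)_L=\phi(V_L\oplus V_H)$ for all $V\subseteq[2n]$. Two $m$-cube USOs $\psi,\psi'$ are isomorphic if there is a bijection $h$ of the set of subsets of $[m]$ such that for all $V,V'$, $V\to V'$ in $\psi$ if and only if $h(V)\to h(V')$ in $\psi'$. *)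

(* Defs.v *)
From mathcomp Require Import all_boot.
Set Implicit Arguments. Unset Strict Implicit. Unset Printing Implicit Defensive.

(* Vertices of the m-cube: subsets of 'I_m (= [m], 0-indexed).
   An orientation is given by its outmap phi : {set 'I_m} -> {set 'I_m}. *)
Definition symdiff (T : finType) (U V : {set T}) : {set T} :=
  (U :\: V) :|: (V :\: U).

Section Cube.
Variable m : nat.
Implicit Types (phi : {set 'I_m} -> {set 'I_m}) (V A B X : {set 'I_m}).

Definition is_orientation phi : Prop :=
  forall V (i : 'I_m), (i \in phi V) = (i \notin phi (symdiff V [set i])).

Definition dedge phi V V' : bool :=
  [exists i : 'I_m, (V' == symdiff V [set i]) && (i \in phi V)].

Definition is_face_sink phi A B X : bool :=
  [&& A \subset X, X \subset B & phi X :&: (B :\: A) == set0].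

Definition is_uso phi : Prop :=
  is_orientation phi /\
  forall A B, A \subset B -> #|[set X | is_face_sink phi A B X]| = 1.

Definition Lrel phi V : rel 'I_m := fun i j =>
  [&& i != j, i \notin V, j \notin V &
      j \in symdiff (phi V) (phi (V :|: [set i]))].

Definition acyclic_rel (T : finType) (r : rel T) : Prop :=
  forall x y, r x y -> ~~ connect r y x.

Definition propL phi : Prop := forall V, acyclic_rel (Lrel phi V).

Definition uso_isomorphic phi phi' : Prop :=
  exists h : {set 'I_m} -> {set 'I_m},
    bijective h /\ forall V V', dedge phi V V' = dedge phi' (h V) (h V').
End Cube.

Definition lowpart n (V : {set 'I_(n + n)}) : {set 'I_n} :=
  [set i : 'I_n | lshift n i \in V].
Definition highpart n (V : {set 'I_(n + n)}) : {set 'I_n} :=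
  [set i : 'I_n | rshift n i \in V].

Definition is_kaleidoscope n (phi : {set 'I_n} -> {set 'I_n})
  (psi : {set 'I_(n + n)} -> {set 'I_(n + n)}) : Prop :=
  is_uso psi /\
  forall V, lowpart (psi V) = phi (symdiff (lowpart V) (highpart V)).

(* Main.v *)
Require Import Defs.
From mathcomp Require Import all_boot.
Set Implicit Arguments. Unset Strict Implicit. Unset Printing Implicit Defensive.

Lemma in_sd (T : finType) (U V : {set T}) x :
  (x \in symdiff U V) = (x \in U) (+) (x \in V).
Proof. by rewrite /symdiff !inE; case: (x \in U); case: (x \in V). Qed.

Lemma flipK (T : finType) (V : {set T}) i :
  symdiff (symdiff V [set i]) [set i] = V.
Proof. by apply/setP=> x; rewrite !in_sd -addbA addbb addbF. Qed.

Lemma flipC (T : finType) (V : {set T}) i j :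
  symdiff (symdiff V [set i]) [set j] = symdiff (symdiff V [set j]) [set i].
Proof. by apply/setP=> x; rewrite !in_sd -!addbA (addbC (x \in [set i])). Qed.

Lemma flip_inj (T : finType) (V : {set T}) i j :
  symdiff V [set i] = symdiff V [set j] -> i = j.
Proof.
move/setP/(_ i); rewrite !in_sd !inE eqxx.
by case: (i \in V); case: eqP.
Qed.

Lemma flip_neq (T : finType) (V : {set T}) i : symdiff V [set i] != V.
Proof.
apply/eqP => /setP/(_ i); rewrite in_sd !inE eqxx.
by case: (i \in V).
Qed.

Lemma flip2_neq (T : finType) (V : {set T}) i j : i != j ->
  symdiff (symdiff V [set i]) [set j] != V.
Proof.
move=> nij; apply/eqP => /setP/(_ i); rewrite !in_sd !inE eqxx (negbTE nij).
by case: (i \in V).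
Qed.

Lemma common_nb (T : finType) (X : {set T}) a b k k' : a != b ->
  symdiff (symdiff X [set a]) [set k] = symdiff (symdiff X [set b]) [set k'] ->
  symdiff (symdiff X [set a]) [set k] != X ->
  k = b.
Proof.
move=> nab E nX.
move/setP: (E) => /(_ a) Ha; rewrite !in_sd !inE eqxx (negbTE nab) in Ha.
case: (eqVneq a k) => [ak|nak].
  by move: nX; rewrite -ak flipK eqxx.
have ak' : a = k'.
  move: Ha; rewrite (negbTE nak); case: (a \in X); case: eqP => //.
move: E; rewrite -ak' flipC => /(congr1 (fun S => symdiff S [set a])); rewrite !flipK; exact: flip_inj.
Qed.

Lemma flip_ind (T : finType) (P : {set T} -> Prop) :
  P set0 -> (forall V e, P V -> P (symdiff V [set e])) -> forall V, P V.
Proof.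
move=> P0 PS V; have [k] := ubnP #|V|; elim: k V => // k IH V HV.
have [->|[e eV]] := set_0Vmem V; first done.
have -> : V = symdiff (symdiff V [set e]) [set e] by rewrite flipK.
apply: PS; apply: IH.
have -> : symdiff V [set e] = V :\ e.
  by apply/setP=> x; rewrite in_sd !inE; case: eqP => [->|]; rewrite ?eV ?andbT ?andbF ?addbF.
by rewrite (cardsD1 e V) eV /= add1n ltnS in HV.
Qed.

Lemma dedge_flip m (phi : {set 'I_m} -> {set 'I_m}) V c :
  dedge phi V (symdiff V [set c]) = (c \in phi V).
Proof.
apply/existsP/idP => [[i /andP[/eqP /flip_inj -> //]]|H].
by exists c; rewrite eqxx.
Qed.

Lemma adjP m (phi : {set 'I_m} -> {set 'I_m}) V V' : is_orientation phi ->
  (dedge phi V V' || dedge phi V' V) = [exists i, V' == symdiff V [set i]].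
Proof.
move=> Ho; apply/idP/existsP.
  case/orP => /existsP [i /andP[/eqP E _]]; exists i; first by rewrite E.
  by rewrite E flipK.
move=> [i /eqP ->]; case Hi: (i \in phi V).
  by rewrite dedge_flip Hi.
apply/orP; right; apply/existsP; exists i; rewrite flipK eqxx /=.
by move: (Ho V i); rewrite Hi => /esym/negbFE.
Qed.
Definition isoH m (psi psi' : {set 'I_m} -> {set 'I_m}) h :=
  [/\ is_orientation psi, is_orientation psi', injective h &
      forall V V', dedge psi V V' = dedge psi' (h V) (h V')].

Lemma hadj m psi psi' (h : {set 'I_m} -> {set 'I_m}) V c : isoH psi psi' h ->
  exists k, h (symdiff V [set c]) = symdiff (h V) [set k].
Proof.
case=> Ho Ho' _ Hd.
have : [exists i, symdiff V [set c] == symdiff V [set i]] by apply/existsP; exists c.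
rewrite -(adjP _ _ Ho) !Hd (adjP _ _ Ho') => /existsP [k /eqP E]; by exists k.
Qed.

Definition sig m (h : {set 'I_m} -> {set 'I_m}) c :=
  odflt c [pick k | h (symdiff set0 [set c]) == symdiff (h set0) [set k]].

Lemma sig0 m psi psi' (h : {set 'I_m} -> {set 'I_m}) c : isoH psi psi' h ->
  h (symdiff set0 [set c]) = symdiff (h set0) [set sig h c].
Proof.
move=> H; rewrite /sig; case: pickP => [k /eqP //|N].
have [k E] := hadj set0 c H; by move: (N k); rewrite E eqxx.
Qed.

Lemma sig_inj m psi psi' (h : {set 'I_m} -> {set 'I_m}) : isoH psi psi' h ->
  injective (sig h).
Proof.
move=> H c d E; have [_ _ hi _] := H.
by apply: (@flip_inj _ set0); apply: hi; rewrite !(sig0 _ H) E.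
Qed.

Lemma sigV m psi psi' (h : {set 'I_m} -> {set 'I_m}) : isoH psi psi' h ->
  forall V d, h (symdiff V [set d]) = symdiff (h V) [set sig h d].
Proof.
move=> H; have [_ _ hi _] := H; apply: flip_ind; first by move=> d; exact: sig0 H.
move=> V e IH d; case: (eqVneq d e) => [->|nde].
  by rewrite flipK IH flipK.
have [k E1] := hadj (symdiff V [set e]) d H.
have [k' E2] := hadj (symdiff V [set d]) e H.
rewrite flipC IH in E2.
rewrite IH in E1.
rewrite E1 IH; congr symdiff; congr [set _].
apply: (@common_nb _ (h V) (sig h e) (sig h d)).
- by apply/eqP => /(sig_inj H) /eqP; rewrite eq_sym (negbTE nde).
- by rewrite -E1; exact: E2.
- rewrite -E1; apply/eqP => /hi /eqP; apply/negP; rewrite flipC; exact: flip2_neq.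
Qed.

Lemma sig_mem m psi psi' (h : {set 'I_m} -> {set 'I_m}) : isoH psi psi' h ->
  forall V c, (sig h c \in h V) = (sig h c \in h set0) (+) (c \in V).
Proof.
move=> H; apply: flip_ind; first by move=> c; rewrite inE addbF.
move=> V e IH c; rewrite (sigV H) !in_sd IH !inE -addbA; congr (_ (+) _); congr (_ (+) _).
by apply/eqP/eqP => [/(sig_inj H)|->].
Qed.

Lemma sig_dir m psi psi' (h : {set 'I_m} -> {set 'I_m}) : isoH psi psi' h ->
  forall V c, (sig h c \in psi' (h V)) = (c \in psi V).
Proof.
move=> H V c; have [_ _ _ Hd] := H.
by rewrite -dedge_flip -(sigV H) -Hd dedge_flip.
Qed.

Lemma connect_map (T T' : finType) (r : rel T) (r' : rel T') (f : T -> T') :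
  (forall a b, r a b -> r' (f a) (f b)) ->
  forall a b, connect r a b -> connect r' (f a) (f b).
Proof.
move=> Hf a b /connectP [p pp ->]; apply/connectP.
exists (map f p); first exact: homo_path pp.
by rewrite last_map.
Qed.

Lemma notL_ex m (phi : {set 'I_m} -> {set 'I_m}) : ~ propL phi ->
  exists U x y, Lrel phi U x y /\ connect (Lrel phi U) y x.
Proof.
move=> nL.
case: (boolP [exists U, exists x, exists y, Lrel phi U x y && connect (Lrel phi U) y x]).
  by move=> /existsP [U /existsP [x /existsP [y /andP [H1 H2]]]]; exists U, x, y.
move=> N; exfalso; apply: nL => U x y Hxy; apply/negP => Hc; move/negP: N; apply.
by apply/existsP; exists U; apply/existsP; exists x; apply/existsP; exists y; rewrite Hxy.
Qed.

Lemma lr_imset n (k : 'I_n) (S : {set 'I_n}) : (lshift n k \in @rshift n n @: S) = false.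
Proof. by apply/imsetP => [[j _ /eqP]]; rewrite eq_lrshift. Qed.
Lemma rl_imset n (k : 'I_n) (S : {set 'I_n}) : (@rshift n n k \in lshift n @: S) = false.
Proof. by apply/imsetP => [[j _ /eqP]]; rewrite eq_rlshift. Qed.

Lemma lowpartE n (V : {set 'I_(n + n)}) k : (k \in lowpart V) = (lshift n k \in V).
Proof. by rewrite /lowpart in_set. Qed.

Theorem theorem6p6 (n : nat) (phi : {set 'I_n} -> {set 'I_n})
  (psi psi' : {set 'I_(n + n)} -> {set 'I_(n + n)}) :
  is_uso phi -> ~ propL phi ->
  is_kaleidoscope phi psi ->
  is_uso psi' -> uso_isomorphic psi psi' ->
  ~ propL psi'.
Proof.
move=> _ nL [[Ho _] Hk] [Ho' _] [h [hb Hd]] HL.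
have H : isoH psi psi' h by split => //; exact: bij_inj.
have hi : injective h := bij_inj hb.
have [U [x [y [Hxy Hyx]]]] := notL_ex nL.
pose s (k : 'I_n) := sig h (lshift n k).
pose L0 := [set k | s k \in h set0].
pose V := lshift n @: L0 :|: @rshift n n @: symdiff U L0.
have lowV : lowpart V = L0.
  apply/setP => k; rewrite !inE lr_imset orbF mem_imset; [by rewrite inE | exact: lshift_inj].
have highV : highpart V = symdiff U L0.
  apply/setP => k; rewrite !inE rl_imset mem_imset; [by rewrite in_sd !inE; case: (k \in U); case: (s k \in h set0) | exact: rshift_inj].
have lowF a : lowpart (symdiff V [set lshift n a]) = symdiff L0 [set a].
  apply/setP => k; rewrite in_sd /lowpart in_set in_sd -lowV in_set !inE.
  by rewrite (inj_eq (@lshift_inj n n)).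
have highF a : highpart (symdiff V [set lshift n a]) = symdiff U L0.
  apply/setP => k; rewrite /highpart in_set in_sd -highV in_set !inE.
  by rewrite eq_rlshift addbF.
have notin a : s a \notin h V.
  by rewrite /s (sig_mem H) -lowpartE lowV inE addbb.
have key a b : Lrel phi U a b -> Lrel psi' (h V) (s a) (s b).
  case/and4P => nab aU bU Hb; apply/and4P; split; rewrite ?notin //.
    by rewrite (inj_eq (sig_inj H)) (inj_eq (@lshift_inj n n)).
  have -> : h V :|: [set s a] = h (symdiff V [set lshift n a]).
    rewrite (sigV H); apply/setP => z; rewrite in_sd !inE.
    case: eqP => [->|]; first by rewrite (negbTE (notin a)).
    by rewrite orbF addbF.
  rewrite in_sd /s !(sig_dir H).
  rewrite -!lowpartE.
  rewrite !Hk lowV highV lowF highF -in_sd.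
  have -> : symdiff L0 (symdiff U L0) = U.
    by apply/setP => z; rewrite !in_sd addbC -addbA addbb addbF.
  have -> : symdiff (symdiff L0 [set a]) (symdiff U L0) = U :|: [set a].
    apply/setP => z; rewrite !in_sd in_setU !in_set1.
    case: eqP => [->|_]; rewrite ?(negbTE aU);
      by case: (_ \in L0); case: (_ \in U).
  by [].
have := HL (h V) (s x) (s y) (key _ _ Hxy).
by rewrite (connect_map key Hyx).
Qed.
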